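(* Let $|B(\vec\lambda,\Phi)\rangle$ be a balanced state with $\vec\lambda=(\lambda_1,\lambda_2,\lambda_3)$, and fix a context $(A,B,C)$ of equatorial measurement angles in $[0,\pi)$ on qubits $1,2,3$. Then: 1. For a given $c\in\{0,1\}$, if one of the events $(A,B,C)\to(0,0,c)$, $(A,B,C)\to(1,1,c)$ is impossible, then the other is impossible if and only if $\delta(\lambda_1,A)\equiv\delta(\lambda_2,B)\equiv\pi$. 2. For a given $c\in\{0,1\}$, if one of the events $(A,B,C)\to(0,1,c)$, $(A,B,C)\to(1,0,c)$ is impossible, then the other is impossible if and only if $\delta(\lambda_1,A)\equiv\delta(\lambda_2,B)$. The analogous statements hold for any other pair of qubits (with the outcome of the remaining qubit fixed and the corresponding $\lambda_i$ and angles).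
   Context: $\equiv$ denotes equality modulo $2\pi$. For $\lambda\in[0,\frac{\pi}{2})$ let $|v_\lambda\rangle=\cos\frac{\lambda}{2}|0\rangle+\sin\frac{\lambda}{2}|1\rangle$, $|w_\lambda\rangle=\sin\frac{\lambda}{2}|0\rangle+\cos\frac{\lambda}{2}|1\rangle$. A balanced state is $|B(\vec\lambda,\Phi)\rangle=\frac{1}{\sqrt2}(|v_{\lambda_1}\rangle|v_{\lambda_2}\rangle|v_{\lambda_3}\rangle+e^{i\Phi}|w_{\lambda_1}\rangle|w_{\lambda_2}\rangle|w_{\lambda_3}\rangle)$ with $\lambda_i\in[0,\frac{\pi}{2})$, $\Phi\in[0,2\pi)$. The equatorial measurement with angle $\varphi$ is $E_\varphi=\cos\varphi X+\sin\varphi Y$, with $+1$ eigenvector $|\varphi\rangle=\frac{1}{\sqrt2}(|0\rangle+e^{i\varphi}|1\rangle)$ and $-1$ eigenvector $|\varphi+\pi\rangle$; outcomes $+1,-1$ are relabelled $0,1$. The event $(A,B,C)\to(a,b,c)$ is impossible if $(\langle A+a\pi|\otimes\langle B+b\pi|\otimes\langle C+c\pi|)|B(\vec\lambda,\Phi)\rangle=0$. Define modulo $2\pi$: $\beta(\lambda,\varphi)=\varphi-2\arctan\left(\frac{\cos\frac{\lambda}{2}\sin\varphi}{\sin\frac{\lambda}{2}+\cos\frac{\lambda}{2}\cos\varphi}\right)$ and $\delta(\lambda,\varphi)=\beta(\lambda,\varphi+\pi)-\beta(\lambda,\varphi)\equiv\pi-2\arctan(\sin\varphi\tan\lambda)$.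 *)

(* Defs.v *)
From Stdlib Require Import Reals ZArith.
From Coquelicot Require Import Complex.
Open Scope R_scope.

Definition eqm2pi (x y : R) : Prop := exists k : Z, x - y = 2 * PI * IZR k.

Definition expi (t : R) : C := (cos t, sin t).

(* a qubit state: pair of amplitudes on |0>, |1> *)
Definition ket := (C * C)%type.

Definition braket (u v : ket) : C :=
  (Cconj (fst u) * fst v + Cconj (snd u) * snd v)%C.

Definition v_ket (lam : R) : ket := (RtoC (cos (lam / 2)), RtoC (sin (lam / 2))).
Definition w_ket (lam : R) : ket := (RtoC (sin (lam / 2)), RtoC (cos (lam / 2))).

Definition eq_ket (phi : R) : ket :=
  (RtoC (/ sqrt 2), (RtoC (/ sqrt 2) * expi phi)%C).

(* outcome bit: false = outcome 0 (eigenvalue +1), true = outcome 1 (eigenvalue -1);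
   the projected eigenvector is |phi + a*pi> *)
Definition out_angle (phi : R) (a : bool) : R := phi + (if a then PI else 0).

(* (<A+a pi| (x) <B+b pi| (x) <C+c pi|) |B(lambda, Phi)>, expanded by linearity *)
Definition amplitude (l1 l2 l3 Phi A B Cc : R) (a b c : bool) : C :=
  (RtoC (/ sqrt 2) *
   ( braket (eq_ket (out_angle A a)) (v_ket l1)
     * braket (eq_ket (out_angle B b)) (v_ket l2)
     * braket (eq_ket (out_angle Cc c)) (v_ket l3)
   + expi Phi
     * (braket (eq_ket (out_angle A a)) (w_ket l1)
        * braket (eq_ket (out_angle B b)) (w_ket l2)
        * braket (eq_ket (out_angle Cc c)) (w_ket l3))))%C.

Definition impossible (l1 l2 l3 Phi A B Cc : R) (a b c : bool) : Prop :=
  amplitude l1 l2 l3 Phi A B Cc a b c = 0%C.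

(* beta(lambda, phi) = phi - 2 arctan(num/den), modulo 2 pi.  When den = 0
   (num is then nonzero for lambda in [0, pi/2)), arctan(+-oo) = +-pi/2, so
   2 arctan = +-pi, which is pi modulo 2 pi. *)
Definition beta (lam phi : R) : R :=
  let num := cos (lam / 2) * sin phi in
  let den := sin (lam / 2) + cos (lam / 2) * cos phi in
  if Req_EM_T den 0 then phi - PI else phi - 2 * atan (num / den).

Definition delta (lam phi : R) : R := beta lam (phi + PI) - beta lam phi.

(* The two claims of the lemma for a pair of qubits whose measurement outcomes
   are (x, y) (the third outcome fixed inside imp), with delta values d1, d2. *)
Definition pair_claim (imp : bool -> bool -> Prop) (d1 d2 : R) : Prop :=
  (imp false false -> (imp true true <-> (eqm2pi d1 PI /\ eqm2pi d2 PI))) /\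
  (imp true true -> (imp false false <-> (eqm2pi d1 PI /\ eqm2pi d2 PI))) /\
  (imp false true -> (imp true false <-> eqm2pi d1 d2)) /\
  (imp true false -> (imp false true <-> eqm2pi d1 d2)).

(* Main.v *)
Require Import Defs.
From Stdlib Require Import Reals ZArith.
From Stdlib Require Import Lra.
From Coquelicot Require Import Complex.
Open Scope R_scope.

Lemma pz3 (L R h1 h2 h3 M1 M2 M3 : R) : h1 = 0 -> h2 = 0 -> h3 = 0 ->
  L - R = h1 * M1 + h2 * M2 + h3 * M3 -> L = R.
Proof. intros H1 H2 H3 H; rewrite H1, H2, H3 in H; lra. Qed.

Lemma lam_facts l : 0 <= l < PI / 2 ->
  0 <= sin (l/2) /\ 0 < cos (l/2) /\ sin (l/2) < cos (l/2) /\
  sin (l/2) * sin (l/2) + cos (l/2) * cos (l/2) = 1.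
Proof.
  intros [H0 H1]. pose proof PI_RGT_0.
  assert (Hs : 0 <= sin (l/2)) by (apply sin_ge_0; lra).
  assert (Hc : 0 < cos (l/2)) by (apply cos_gt_0; lra).
  assert (Hl : 0 < cos l) by (apply cos_gt_0; lra).
  assert (Hcl : cos l = cos (l/2) * cos (l/2) - sin (l/2) * sin (l/2)).
  { replace l with (2 * (l/2)) at 1 by field. apply cos_2a. }
  pose proof (sin2_cos2 (l/2)) as H2. unfold Rsqr in H2.
  repeat split; try lra. nra.
Qed.

Lemma den_pos l t : 0 <= l < PI / 2 ->
  0 < 1 + 2 * sin (l/2) * cos (l/2) * cos t.
Proof.
  intros Hl. destruct (lam_facts l Hl) as (Hs & Hc & Hsc & H1).
  pose proof (COS_bound t). 
  assert (0 <= sin (l/2) * cos (l/2) * (1 + cos t)).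
  { apply Rmult_le_pos; [apply Rmult_le_pos|]; lra. }
  nra.
Qed.

Lemma atan2_cs q : cos (2 * atan q) = (1 - q*q)/(1 + q*q) /\
                   sin (2 * atan q) = 2 * q / (1 + q*q).
Proof.
  assert (Hp : 0 < 1 + q * q) by nra.
  assert (Hr : sqrt (1 + q*q) * sqrt (1 + q*q) = 1 + q*q) by (apply sqrt_sqrt; lra).
  assert (Hr0 : 0 < sqrt (1 + q*q)) by (apply sqrt_lt_R0; lra).
  rewrite cos_2a, sin_2a, cos_atan, sin_atan. unfold Rsqr.
  set (r := sqrt (1 + q*q)) in *. rewrite <- Hr. split; field; lra.
Qed.

Lemma beta_cs_raw (s c C S : R) :
  0 <= s -> 0 < c -> s < c -> s*s + c*c = 1 -> C*C + S*S = 1 ->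
  s + c * C <> 0 ->
  C * ((1 - (c*S/(s+c*C))*(c*S/(s+c*C))) / (1 + (c*S/(s+c*C))*(c*S/(s+c*C))))
  + S * (2 * (c*S/(s+c*C)) / (1 + (c*S/(s+c*C))*(c*S/(s+c*C))))
   = (2*s*c + C)/(1 + 2*s*c*C) /\
  S * ((1 - (c*S/(s+c*C))*(c*S/(s+c*C))) / (1 + (c*S/(s+c*C))*(c*S/(s+c*C))))
  - C * (2 * (c*S/(s+c*C)) / (1 + (c*S/(s+c*C))*(c*S/(s+c*C))))
   = - ((c*c - s*s) * S) / (1 + 2*s*c*C).
Proof.
  intros Hs Hc Hsc H1 H2 HD.
  assert (Hden : (s + c*C)*(s+c*C) + (c*S)*(c*S) = 1 + 2*s*c*C).
  { apply (pz3 _ _ (s*s+c*c-1) (C*C+S*S-1) 0 1 (c*c) 0); try lra; ring. }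
  assert (Hd2 : 0 < (s + c*C)*(s+c*C) + (c*S)*(c*S)).
  { assert (0 < (s + c*C)*(s+c*C)) by (apply Rsqr_pos_lt; exact HD). nra. }
  split.
  - transitivity ((C*((s+c*C)*(s+c*C) - (c*S)*(c*S)) + 2*S*(c*S)*(s+c*C))
                  / ((s + c*C)*(s+c*C) + (c*S)*(c*S))).
    + field. split; lra.
    + rewrite Hden. f_equal.
      apply (pz3 _ _ (s*s+c*c-1) (C*C+S*S-1) 0 C (2*s*c + c*c*C) 0); try lra; ring.
  - transitivity ((S*((s+c*C)*(s+c*C) - (c*S)*(c*S)) - 2*C*(c*S)*(s+c*C))
                  / ((s + c*C)*(s+c*C) + (c*S)*(c*S))).
    + field. split; lra.
    + rewrite Hden. unfold Rdiv. f_equal.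
      apply (pz3 _ _ (s*s+c*c-1) (C*C+S*S-1) 0 0 (-(c*c*S)) 0); try lra; ring.
Qed.

Lemma eq_div (a b d : R) : d <> 0 -> a * d = b -> a = b / d.
Proof. intros Hd H. rewrite <- H. field. exact Hd. Qed.

Lemma beta_cs l t : 0 <= l < PI / 2 ->
  cos (beta l t) = (2 * sin (l/2) * cos (l/2) + cos t) / (1 + 2 * sin (l/2) * cos (l/2) * cos t) /\
  sin (beta l t) = - ((cos (l/2) * cos (l/2) - sin (l/2) * sin (l/2)) * sin t) / (1 + 2 * sin (l/2) * cos (l/2) * cos t).
Proof.
  intros Hl. pose proof (den_pos l t Hl) as Hd.
  destruct (lam_facts l Hl) as (Hs & Hc & Hsc & H1).
  pose proof (sin2_cos2 t) as H2. unfold Rsqr in H2.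
  unfold beta.
  set (s := sin (l/2)) in *. set (c := cos (l/2)) in *.
  set (C := cos t) in *. set (S := sin t) in *.
  destruct (Req_EM_T (s + c * C) 0) as [HD|HD].
  - rewrite cos_minus, sin_minus, cos_PI, sin_PI. fold C S. split.
    + apply eq_div; [lra|].
      apply (pz3 _ _ (s*s+c*c-1) (C*C+S*S-1) (s + c*C) (2*C) 0 (-(2*s*C+2*c))); try lra; ring.
    + apply eq_div; [lra|].
      apply (pz3 _ _ (s*s+c*c-1) (C*C+S*S-1) (s + c*C) S 0 (-(2*s*S))); try lra; ring.
  - rewrite cos_minus, sin_minus. fold C S.
    destruct (atan2_cs (c * S / (s + c * C))) as [E1 E2]. rewrite E1, E2.
    destruct (beta_cs_raw s c C S Hs Hc Hsc H1 (ltac:(lra)) HD) as [F1 F2].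
    split; [rewrite <- F1 | rewrite <- F2]; ring.
Qed.

Lemma div_m1 a d : d <> 0 -> a = - d -> a / d = -1.
Proof. intros H E; rewrite E; field; exact H. Qed.

Lemma delta_range l t : 0 <= l < PI / 2 -> 0 <= t <= PI ->
  0 <= sin (delta l t) /\ (sin (delta l t) = 0 -> cos (delta l t) = -1).
Proof.
  intros Hl Ht. unfold delta.
  destruct (beta_cs l t Hl) as [c0 s0].
  destruct (beta_cs l (t + PI) Hl) as [c1 s1].
  pose proof (den_pos l t Hl) as d0. pose proof (den_pos l (t+PI) Hl) as d1.
  rewrite neg_cos, neg_sin in *.
  rewrite sin_minus, cos_minus, c0, s0, c1, s1.
  destruct (lam_facts l Hl) as (Hs & Hc & Hsc & H1).
  pose proof (sin2_cos2 t) as H2. unfold Rsqr in H2.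
  assert (HS : 0 <= sin t) by (apply sin_ge_0; lra).
  set (s := sin (l/2)) in *. set (c := cos (l/2)) in *.
  set (C := cos t) in *. set (S := sin t) in *.
  set (D0 := 1 + 2*s*c*C) in *. set (D1 := 1 + 2*s*c*(-C)) in *.
  assert (E : - ((c * c - s * s) * - S) / D1 * ((2 * s * c + C) / D0) -
  (2 * s * c + - C) / D1 * (- ((c * c - s * s) * S) / D0)
              = (4*s*c*(c*c-s*s)*S) / (D0*D1)).
  { clearbody D0 D1. field. split; lra. }
  assert (Hk : 0 < c*c - s*s) by nra.
  assert (HDD : 0 < D0 * D1) by nra.
  split.
  - rewrite E. unfold Rdiv. apply Rmult_le_pos.
    + repeat apply Rmult_le_pos; lra.
    + left; apply Rinv_0_lt_compat; lra.
  - rewrite E. intros Hz.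
    assert (Hn : 4*s*c*(c*c-s*s)*S = 0).
    { apply (Rmult_eq_reg_r (/ (D0*D1))). rewrite Rmult_0_l. exact Hz.
      apply Rinv_neq_0_compat; lra. }
    assert (Hor : s = 0 \/ S = 0).
    { destruct (Req_dec s 0); [left; auto|right].
      apply (Rmult_eq_reg_l (4*s*c*(c*c-s*s))). rewrite Rmult_0_r. exact Hn.
      repeat apply Rmult_integral_contrapositive_currified; lra. }
    assert (Hnum : (2 * s * c + - C) / D1 * ((2 * s * c + C) / D0) +
   - ((c * c - s * s) * - S) / D1 * (- ((c * c - s * s) * S) / D0)
              = ((2*s*c - C)*(2*s*c+C) - (c*c-s*s)*(c*c-s*s)*S*S) / (D0*D1)).
    { clearbody D0 D1. field. split; lra. }
    rewrite Hnum. apply div_m1; [lra|]. unfold D0, D1.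
    destruct Hor as [Hz0|Hz0].
    + apply (pz3 _ _ (s*s+c*c-1) (C*C+S*S-1) s (-(S*S*(1+c*c))) (-1)
        (4*s*c*c - 4*s*c*c*C*C + s*S*S*(2*c*c - s*s) + s*S*S*(1+c*c))); try lra; ring.
    + apply (pz3 _ _ (s*s+c*c-1) (C*C+S*S-1) S 0 (-(1+4*s*s*c*c))
        (S*(1+4*s*s*c*c) - (c*c-s*s)*(c*c-s*s)*S)); try lra; ring.
Qed.

Lemma cs_2pik (k : Z) : cos (2 * PI * IZR k) = 1 /\ sin (2 * PI * IZR k) = 0.
Proof.
  assert (Hs : sin (PI * IZR k) = 0).
  { apply sin_eq_0_1. exists k. ring. }
  split.
  - replace (2 * PI * IZR k) with (2 * (PI * IZR k)) by ring.
    rewrite cos_2a_sin, Hs. ring.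
  - apply sin_eq_0_1. exists (2 * k)%Z. rewrite mult_IZR. simpl. ring.
Qed.

Lemma eqm_iff x y : eqm2pi x y <-> (cos x = cos y /\ sin x = sin y).
Proof.
  split.
  - intros [k Hk]. replace x with (y + 2 * PI * IZR k) by lra.
    destruct (cs_2pik k) as [H1 H2].
    rewrite cos_plus, sin_plus, H1, H2. split; ring.
  - intros [H1 H2].
    assert (Hc : cos (x - y) = 1).
    { rewrite cos_minus, H1, H2. pose proof (sin2_cos2 y). unfold Rsqr in *. lra. }
    assert (Hs : sin ((x - y)/2) = 0).
    { replace (x - y) with (2 * ((x-y)/2)) in Hc by field.
      rewrite cos_2a_sin in Hc. nra. }
    destruct (sin_eq_0_0 _ Hs) as [k Hk]. exists k. lra.
Qed.

Lemma eqm_refl x : eqm2pi x x.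
Proof. exists 0%Z. simpl. ring. Qed.

Lemma eqm_sym x y : eqm2pi x y -> eqm2pi y x.
Proof. intros [k Hk]. exists (- k)%Z. rewrite opp_IZR. lra. Qed.

Lemma eqm_trans x y z : eqm2pi x y -> eqm2pi y z -> eqm2pi x z.
Proof. intros [k Hk] [m Hm]. exists (k + m)%Z. rewrite plus_IZR. lra. Qed.

Lemma eqm_add x y u v : eqm2pi x y -> eqm2pi u v -> eqm2pi (x + u) (y + v).
Proof. intros [k Hk] [m Hm]. exists (k + m)%Z. rewrite plus_IZR. lra. Qed.

Lemma eqm_shift a u : eqm2pi a PI -> (eqm2pi (a + u) PI <-> eqm2pi u 0).
Proof.
  intros [k Hk]. split.
  - intros [m Hm]. exists (m - k)%Z. rewrite minus_IZR. lra.
  - intros [m Hm]. exists (m + k)%Z. rewrite plus_IZR. lra.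
Qed.

Lemma eqm_diff d1 d2 : eqm2pi (d1 - d2) 0 <-> eqm2pi d1 d2.
Proof. split; intros [k Hk]; exists k; lra. Qed.

Definition rng (d : R) := 0 <= sin d /\ (sin d = 0 -> cos d = -1).

Lemma sum0_iff d1 d2 : rng d1 -> rng d2 ->
  (eqm2pi (d1 + d2) 0 <-> (eqm2pi d1 PI /\ eqm2pi d2 PI)).
Proof.
  intros [r1 r1'] [r2 r2']. rewrite !eqm_iff, cos_0, sin_0, cos_PI, sin_PI.
  rewrite cos_plus, sin_plus.
  pose proof (sin2_cos2 d1). pose proof (sin2_cos2 d2). unfold Rsqr in *.
  split.
  - intros [Ha Hb].
    assert (E : sin d2 = - sin d1).
    { transitivity (sin d2 * (sin d1 * sin d1 + cos d1 * cos d1)).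
      - rewrite H; ring.
      - transitivity (- sin d1 * (cos d1 * cos d2 - sin d1 * sin d2)
                      + cos d1 * (sin d1 * cos d2 + cos d1 * sin d2)).
        + ring.
        + rewrite Ha, Hb. ring. }
    assert (Z1 : sin d1 = 0) by lra. assert (Z2 : sin d2 = 0) by lra.
    auto.
  - intros [[Ha Hb] [Hc Hd]]. rewrite Ha, Hb, Hc, Hd. split; ring.
Qed.

Lemma eqm_neg u : eqm2pi (- u) 0 <-> eqm2pi u 0.
Proof. split; intros [k Hk]; exists (- k)%Z; rewrite opp_IZR; lra. Qed.

Definition pair_abs (imp : bool -> bool -> Prop) T d1 d2 :=
  forall x y, imp x y <-> eqm2pi (T + (if x then d1 else 0) + (if y then d2 else 0)) PI.

Lemma pair_lemma imp T d1 d2 : pair_abs imp T d1 d2 -> rng d1 -> rng d2 ->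
  pair_claim imp d1 d2.
Proof.
  intros H R1 R2. unfold pair_claim.
  unfold pair_abs in H. rewrite !H. cbv iota. rewrite !Rplus_0_r.
  split; [|split; [|split]].
  - intros H0. rewrite <- sum0_iff by assumption.
    rewrite Rplus_assoc. apply eqm_shift. exact H0.
  - intros H0. rewrite <- sum0_iff by assumption.
    replace T with ((T + d1 + d2) + - (d1 + d2)) by ring.
    rewrite (eqm_shift _ _ H0). apply eqm_neg.
  - intros H0. rewrite <- (eqm_diff d1 d2).
    replace (T + d1) with ((T + d2) + (d1 - d2)) by ring.
    apply eqm_shift. exact H0.
  - intros H0. rewrite <- (eqm_diff d1 d2).
    replace (T + d2) with ((T + d1) + - (d1 - d2)) by ring.
    rewrite (eqm_shift _ _ H0). apply eqm_neg.
Qed.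

Lemma pw_eq l t : 0 <= l < PI / 2 ->
  braket (eq_ket t) (w_ket l) = (braket (eq_ket t) (v_ket l) * expi (beta l t))%C.
Proof.
  intros Hl. destruct (beta_cs l t Hl) as [Hc0 Hs0].
  pose proof (den_pos l t Hl) as Hd.
  destruct (lam_facts l Hl) as (Hs & Hc & Hsc & H1).
  pose proof (sin2_cos2 t) as H2. unfold Rsqr in H2.
  unfold braket, eq_ket, v_ket, w_ket, expi. rewrite Hc0, Hs0.
  set (s := sin (l/2)) in *. set (c := cos (l/2)) in *.
  set (C := cos t) in *. set (S := sin t) in *.
  set (r := / sqrt 2).
  set (d := 1 + 2*s*c*C) in *.
  unfold Cmult, Cplus, Cconj, RtoC. simpl. f_equal.
  - assert (Hp : (c+s*C)*(2*s*c+C) - s*S*((c*c-s*s)*S) = (s+c*C)*d).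
    { unfold d. apply (pz3 _ _ (s*s+c*c-1) (C*C+S*S-1) 0 (-(s*(C*C-1))) (-(s*c*c - s*s*s)) 0);
        try lra; ring. }
    transitivity (r*((s+c*C)*d)/d). { field; lra. }
    rewrite <- Hp. field. lra.
  - assert (Hp : (c+s*C)*(-((c*c-s*s)*S)) - s*S*(2*s*c+C) = -(c*S)*d).
    { unfold d. apply (pz3 _ _ (s*s+c*c-1) (C*C+S*S-1) 0 (S*(s*C - c)) 0 0);
        try lra; ring. }
    transitivity (r*(-(c*S)*d)/d). { field; lra. }
    rewrite <- Hp. field. lra.
Qed.

Lemma pv_nz l t : 0 <= l < PI / 2 -> braket (eq_ket t) (v_ket l) <> 0%C.
Proof.
  intros Hl. pose proof (den_pos l t Hl) as Hd.
  destruct (lam_facts l Hl) as (Hs & Hc & Hsc & H1).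
  pose proof (sin2_cos2 t) as H2. unfold Rsqr in H2.
  assert (Hr : 0 < / sqrt 2) by (apply Rinv_0_lt_compat, sqrt_lt_R0; lra).
  unfold braket, eq_ket, v_ket, expi, Cmult, Cplus, Cconj, RtoC. simpl.
  set (s := sin (l/2)) in *. set (c := cos (l/2)) in *.
  set (C := cos t) in *. set (S := sin t) in *.
  set (r := / sqrt 2) in *.
  intros E. injection E. intros E2 E1.
  assert (F1 : r * (c + s * C) = 0) by lra.
  assert (F2 : r * (s * S) = 0) by lra.
  apply Rmult_integral in F1. apply Rmult_integral in F2.
  destruct F1 as [F1|F1]; [lra|]. destruct F2 as [F2|F2]; [lra|].
  assert (Hp : (c + s*C)*(c+s*C) + (s*S)*(s*S) = 1 + 2*s*c*C).
  { apply (pz3 _ _ (s*s+c*c-1) (C*C+S*S-1) 0 1 (s*s) 0); try lra; ring. }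
  rewrite F1, F2 in Hp. lra.
Qed.

Lemma expi_mul x y : (expi x * expi y)%C = expi (x + y).
Proof. unfold expi, Cmult. simpl. rewrite cos_plus, sin_plus. f_equal; ring. Qed.

Lemma cmul_zero (z w : Complex.C) : z <> 0%C -> (z * w)%C = 0%C -> w = 0%C.
Proof.
  intros Hz H. rewrite <- (Cmult_1_l w). rewrite <- (Cinv_l z Hz).
  rewrite <- Cmult_assoc, H. apply Cmult_0_r.
Qed.

Lemma one_plus_expi t : (RtoC 1 + expi t)%C = 0%C <-> eqm2pi t PI.
Proof.
  rewrite eqm_iff, cos_PI, sin_PI. unfold expi, Cplus, RtoC. simpl.
  split.
  - intros E. injection E. intros. lra.
  - intros [E1 E2]. rewrite E1, E2. f_equal; ring.
Qed.

Definition bet l t (a : bool) := beta l (out_angle t a).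

Lemma imp_iff l1 l2 l3 Phi A B Cc a b c :
  0 <= l1 < PI / 2 -> 0 <= l2 < PI / 2 -> 0 <= l3 < PI / 2 ->
  impossible l1 l2 l3 Phi A B Cc a b c <->
  eqm2pi (Phi + bet l1 A a + bet l2 B b + bet l3 Cc c) PI.
Proof.
  intros H1 H2 H3. unfold impossible, amplitude, bet.
  rewrite !pw_eq by assumption.
  set (pa := braket (eq_ket (out_angle A a)) (v_ket l1)).
  set (pb := braket (eq_ket (out_angle B b)) (v_ket l2)).
  set (pc := braket (eq_ket (out_angle Cc c)) (v_ket l3)).
  assert (Hpa : pa <> 0%C) by apply pv_nz, H1.
  assert (Hpb : pb <> 0%C) by apply pv_nz, H2.
  assert (Hpc : pc <> 0%C) by apply pv_nz, H3.
  assert (Hr : RtoC (/ sqrt 2) <> 0%C).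
  { intros E. injection E. intros. 
    assert (0 < / sqrt 2) by (apply Rinv_0_lt_compat, sqrt_lt_R0; lra). lra. }
  rewrite <- one_plus_expi. rewrite <- !expi_mul.
  match goal with |- (?L = _) <-> _ =>
    replace L with (RtoC (/ sqrt 2) * pa * pb * pc *
       (RtoC 1 + expi Phi * expi (beta l1 (out_angle A a)) * expi (beta l2 (out_angle B b))
                * expi (beta l3 (out_angle Cc c))))%C by ring end.
  split.
  - intros E. apply cmul_zero in E; [exact E|].
    repeat apply Cmult_neq_0; assumption.
  - intros E. rewrite E. apply Cmult_0_r.
Qed.

Lemma bet_split l t (x : bool) : bet l t x = bet l t false + (if x then delta l t else 0).
Proof. unfold bet, out_angle, delta. destruct x; rewrite !Rplus_0_r; ring. Qed.

Lemma rng_delta l t : 0 <= l < PI / 2 -> 0 <= t < PI -> rng (delta l t).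
Proof. intros. apply delta_range; lra. Qed.

Theorem lemma8 (l1 l2 l3 Phi A B Cc : R)
  (hl1 : 0 <= l1 < PI / 2) (hl2 : 0 <= l2 < PI / 2) (hl3 : 0 <= l3 < PI / 2)
  (hPhi : 0 <= Phi < 2 * PI)
  (hA : 0 <= A < PI) (hB : 0 <= B < PI) (hC : 0 <= Cc < PI) :
  (forall c : bool,
     pair_claim (fun x y => impossible l1 l2 l3 Phi A B Cc x y c)
                (delta l1 A) (delta l2 B)) /\
  (forall b : bool,
     pair_claim (fun x z => impossible l1 l2 l3 Phi A B Cc x b z)
                (delta l1 A) (delta l3 Cc)) /\
  (forall a : bool,
     pair_claim (fun y z => impossible l1 l2 l3 Phi A B Cc a y z)
                (delta l2 B) (delta l3 Cc)).
Proof.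
  split; [|split].
  - intros c.
    apply (pair_lemma _ (Phi + bet l1 A false + bet l2 B false + bet l3 Cc c));
      [| apply rng_delta; assumption | apply rng_delta; assumption].
    intros x y. rewrite imp_iff by assumption.
    rewrite (bet_split l1 A x), (bet_split l2 B y).
    replace (Phi + (bet l1 A false + (if x then delta l1 A else 0)) +
      (bet l2 B false + (if y then delta l2 B else 0)) + bet l3 Cc c)
      with (Phi + bet l1 A false + bet l2 B false + bet l3 Cc c +
            (if x then delta l1 A else 0) + (if y then delta l2 B else 0)) by ring.
    reflexivity.
  - intros b.
    apply (pair_lemma _ (Phi + bet l1 A false + bet l2 B b + bet l3 Cc false));
      [| apply rng_delta; assumption | apply rng_delta; assumption].
    intros x y. rewrite imp_iff by assumption.
    rewrite (bet_split l1 A x), (bet_split l3 Cc y).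
    replace (Phi + (bet l1 A false + (if x then delta l1 A else 0)) + bet l2 B b +
      (bet l3 Cc false + (if y then delta l3 Cc else 0)))
      with (Phi + bet l1 A false + bet l2 B b + bet l3 Cc false +
            (if x then delta l1 A else 0) + (if y then delta l3 Cc else 0)) by ring.
    reflexivity.
  - intros a.
    apply (pair_lemma _ (Phi + bet l1 A a + bet l2 B false + bet l3 Cc false));
      [| apply rng_delta; assumption | apply rng_delta; assumption].
    intros x y. rewrite imp_iff by assumption.
    rewrite (bet_split l2 B x), (bet_split l3 Cc y).
    replace (Phi + bet l1 A a + (bet l2 B false + (if x then delta l2 B else 0)) +
      (bet l3 Cc false + (if y then delta l3 Cc else 0)))
      with (Phi + bet l1 A a + bet l2 B false + bet l3 Cc false +
            (if x then delta l2 B else 0) + (if y then delta l3 Cc else 0)) by ring.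
    reflexivity.
Qed.
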